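(* Let $\mathbf{L}$ be a real symmetric $N\times N$ matrix with $\|\mathbf{L}\|\le\varrho$, orthonormal eigenvectors $\boldsymbol{\phi}_n$ and eigenvalues $\lambda_n$, $n=1,\dots,N$. Let $K\ge1$, $\psi^{(k)}\neq0,\varphi^{(k)}\in\mathbb{C}$ for $k=1,\dots,K$, $c\in\mathbb{C}$, and $\mathbf{x}\in\mathbb{C}^N$ fixed. Consider the parallel ARMA$_K$ recursion $$\mathbf{y}^{(k)}_{t+1}=\psi^{(k)}\mathbf{L}\mathbf{y}^{(k)}_t+\varphi^{(k)}\mathbf{x}\ (k=1,\dots,K),\qquad \mathbf{z}_{t+1}=\sum_{k=1}^K\mathbf{y}^{(k)}_{t+1}+c\,\mathbf{x},$$ with arbitrary initial conditions $\mathbf{y}^{(k)}_0$. Let $r_k=-\varphi^{(k)}/\psi^{(k)}$ and $p_k=1/\psi^{(k)}$. Then the frequency response of this recursion is $$H(\lambda)=c+\sum_{k=1}^K\frac{r_k}{\lambda-p_k}\qquad\text{subject to } |p_k|>\varrho \text{ for all } k,$$ i.e. under these conditions $\mathbf{z}_t$ converges linearly, irrespective of the initial conditions and of $\mathbf{L}$, to $\sum_{n=1}^N H(\lambda_n)\langle\mathbf{x},\boldsymbol{\phi}_n\rangle\boldsymbol{\phi}_n$.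
   Context: $\mathbf{L}$ is a symmetric local graph representation matrix (e.g. a possibly shifted graph Laplacian) of an undirected graph; all considered $\mathbf{L}$ have eigenvalues in $[\lambda_{\min},\lambda_{\max}]$ and $\varrho=\max\{|\lambda_{\min}|,|\lambda_{\max}|\}$. Linear convergence means convergence exponentially fast in $t$. *)

(* Defs.v *)
From HB Require Import structures.
From mathcomp Require Import all_boot all_order all_algebra.
From mathcomp Require Import complex.
Set Implicit Arguments. Unset Strict Implicit. Unset Printing Implicit Defensive.
Import Order.TTheory GRing.Theory Num.Theory.
Local Open Scope ring_scope.

Section Arma.
Variables (R : rcfType) (N : nat).

Definition cplx_mx m n (A : 'M[R]_(m, n)) : 'M[R[i]]_(m, n) :=
  map_mx (fun a => a%:C%C) A.

Fixpoint arma_branch (L : 'M[R]_N) (psi varphi : R[i]) (x y0 : 'cV[R[i]]_N)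
    (t : nat) : 'cV[R[i]]_N :=
  match t with
  | 0 => y0
  | t'.+1 => psi *: (cplx_mx L *m arma_branch L psi varphi x y0 t') + varphi *: x
  end.

(* Output of the parallel ARMA_K recursion: z_t = sum_k y^(k)_t + c x
   (for t >= 1 this is exactly the recursion z_{t+1} = sum_k y^(k)_{t+1} + c x;
    the value at t = 0 is irrelevant for convergence). *)
Definition arma_output (K : nat) (L : 'M[R]_N) (psi varphi : 'I_K -> R[i])
    (c : R[i]) (x : 'cV[R[i]]_N) (y0 : 'I_K -> 'cV[R[i]]_N) (t : nat)
    : 'cV[R[i]]_N :=
  \sum_(k < K) arma_branch L (psi k) (varphi k) x (y0 k) t + c *: x.

Definition arma_pole K (psi : 'I_K -> R[i]) k : R[i] := (psi k)^-1.
Definition arma_residue K (psi varphi : 'I_K -> R[i]) k : R[i] :=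
  - varphi k / psi k.
Definition freq_resp K (psi varphi : 'I_K -> R[i]) (c : R[i]) (lam : R[i])
    : R[i] :=
  c + \sum_(k < K) arma_residue psi varphi k / (lam - arma_pole psi k).

Definition cinner (x v : 'cV[R[i]]_N) : R[i] :=
  \sum_(j < N) x j 0 * (v j 0)^*%C.

Definition graph_filter_target K (psi varphi : 'I_K -> R[i]) (c : R[i])
    (lam : 'I_N -> R) (phi : 'I_N -> 'cV[R]_N) (x : 'cV[R[i]]_N)
    : 'cV[R[i]]_N :=
  \sum_(n < N) (freq_resp psi varphi c (lam n)%:C%C * cinner x (cplx_mx (phi n)))
                 *: cplx_mx (phi n).

Definition converges_linearly (u : nat -> 'cV[R[i]]_N) (l : 'cV[R[i]]_N) :=
  exists (C q : R), 0 <= q /\ q < 1 /\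
    forall t (j : 'I_N), Normc.normc (u t j 0 - l j 0) <= C * q ^+ t.

End Arma.

(* Main.v *)
Require Import Defs.
From HB Require Import structures.
From mathcomp Require Import all_boot all_order all_algebra.
From mathcomp Require Import complex.
From mathcomp Require Import ring.
Import Order.TTheory GRing.Theory Num.Theory.
Local Open Scope ring_scope.

Section Helpers.
Variable R : rcfType.

Lemma nmE (z : R[i]) : `|z| = (Normc.normc z)%:C%C.
Proof. by case: z. Qed.

Lemma nm_ge0 (z : R[i]) : 0 <= Normc.normc z.
Proof. by rewrite -lecR -nmE normr_ge0. Qed.

Lemma nm_real (a : R) : Normc.normc (a%:C%C) = `|a|.
Proof. by rewrite /= expr0n /= addr0 sqrtr_sqr. Qed.

Lemma cplx_mxM m n p (A : 'M[R]_(m, n)) (B : 'M[R]_(n, p)) :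
  cplx_mx (A *m B) = cplx_mx A *m cplx_mx B.
Proof.
apply/matrixP => i j; rewrite !mxE rmorph_sum; apply: eq_bigr => k _.
by rewrite !mxE rmorphM.
Qed.

Lemma cplx_mxZ m n (a : R) (A : 'M[R]_(m, n)) :
  cplx_mx (a *: A) = a%:C%C *: cplx_mx A.
Proof. by apply/matrixP => i j; rewrite !mxE rmorphM. Qed.

Lemma cplx_mxT m n (A : 'M[R]_(m, n)) : cplx_mx A^T = (cplx_mx A)^T.
Proof. by apply/matrixP => i j; rewrite !mxE. Qed.

Variable N : nat.

Lemma cinnerE (u : 'cV[R[i]]_N) (w : 'cV[R]_N) :
  cinner u (cplx_mx w) = ((cplx_mx w)^T *m u) 0 0.
Proof.
rewrite /cinner mxE; apply: eq_bigr => j _; rewrite !mxE conjc_real mulrC.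
by [].
Qed.

End Helpers.

Theorem theorem2 (R : rcfType) (N : nat) (L : 'M[R]_N) (rho : R)
    (lam : 'I_N -> R) (phi : 'I_N -> 'cV[R]_N)
    (hsym : L^T = L)
    (horth : forall n m : 'I_N, ((phi n)^T *m phi m) 0 0 = (n == m)%:R)
    (heig : forall n : 'I_N, L *m phi n = lam n *: phi n)
    (hnorm : forall n : 'I_N, `|lam n| <= rho)
    (K : nat) (hK : (1 <= K)%N) (psi varphi : 'I_K -> R[i]) (c : R[i])
    (x : 'cV[R[i]]_N)
    (hpsi : forall k, psi k != 0)
    (hpole : forall k, rho < Normc.normc (arma_pole psi k)) :
  forall y0 : 'I_K -> 'cV[R[i]]_N,
    converges_linearly (arma_output L psi varphi c x y0)
      (graph_filter_target psi varphi c lam phi x).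
Proof.
move=> y0.
set Phi := fun n => cplx_mx (phi n).
set Lc := cplx_mx L.
have hcomp : forall v : 'cV[R[i]]_N, v = \sum_n cinner v (Phi n) *: Phi n.
  move=> v.
  pose P : 'M[R]_N := \matrix_(i, n) phi n i 0.
  have hP : P^T *m P = 1%:M.
    apply/matrixP => a b; rewrite !mxE -horth mxE.
    by apply: eq_bigr => i _; rewrite !mxE //.
  have hP' := mulmx1C hP.
  have E : forall i j, \sum_n (phi n i 0 * phi n j 0) = (i == j)%:R.
    move=> i j; move/matrixP/(_ i j): hP'; rewrite !mxE => <-.
    by apply: eq_bigr => n _; rewrite !mxE //.
  apply/matrixP => j z; rewrite (ord1 z) summxE.
  under eq_bigr => n _ do rewrite mxE /cinner mulr_suml.
  rewrite exchange_big /=.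
  rewrite (eq_bigr (fun i => v i 0 * ((i == j)%:R)%:C%C)); last first.
    move=> i _; rewrite -E rmorph_sum mulr_sumr; apply: eq_bigr => n _.
    by rewrite !mxE conjc_real rmorphM mulrA.
  rewrite (bigD1 j) //= eqxx mulr1 big1 ?addr0 // => i /negbTE ->.
  by rewrite mulr0.

have heigc : forall n, Lc *m Phi n = (lam n)%:C%C *: Phi n.
  by move=> n; rewrite /Lc /Phi -cplx_mxM heig cplx_mxZ.
have hco : forall n v, cinner (Lc *m v) (Phi n) = (lam n)%:C%C * cinner v (Phi n).
  move=> n v; rewrite !cinnerE mulmxA -cplx_mxT -cplx_mxM -{1}hsym -trmx_mul.
  by rewrite heig linearZ /= cplx_mxZ -scalemxAl mxE.
have cinnerB : forall n u v, cinner (u - v) (Phi n) = cinner u (Phi n) - cinner v (Phi n).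
  by move=> n u v; rewrite !cinnerE mulmxBr !mxE.
have cinnerZ : forall n a u, cinner (a *: u) (Phi n) = a * cinner u (Phi n).
  by move=> n a u; rewrite !cinnerE -scalemxAr mxE.
pose g k n := arma_residue psi varphi k / ((lam n)%:C%C - arma_pole psi k).
have hne : forall k n, (lam n)%:C%C - arma_pole psi k != 0.
  move=> k n; rewrite subr_eq0; apply/eqP => E; have := hpole k.
  by rewrite -E nm_real ltNge hnorm.
have hg : forall k n, psi k * (g k n * (lam n)%:C%C) + varphi k = g k n.
  move=> k n; have := hne k n; have := hpsi k.
  rewrite /g /arma_residue /arma_pole => h1 h2.
  have h3 : (lam n)%:C%C * psi k - 1 = ((lam n)%:C%C - (psi k)^-1) * psi k.
    by rewrite mulrBl mulVf.
  by field; rewrite h1 /= h3 mulf_neq0.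
pose ys k := \sum_n (g k n * cinner x (Phi n)) *: Phi n.
have hx := hcomp x.
have hfix : forall k, ys k = psi k *: (Lc *m ys k) + varphi k *: x.
  move=> k.
  transitivity (psi k *: (Lc *m ys k) + varphi k *: \sum_n cinner x (Phi n) *: Phi n); last by rewrite -hx.
  rewrite /ys mulmx_sumr !scaler_sumr -big_split; apply: eq_bigr => n _ /=.
  rewrite -scalemxAr heigc !scalerA -scalerDl; congr (_ *: _).
  by rewrite -{1}(hg k n); ring.
have herr : forall k t n,
    cinner (arma_branch L (psi k) (varphi k) x (y0 k) t - ys k) (Phi n)
    = (psi k * (lam n)%:C%C) ^+ t * cinner (y0 k - ys k) (Phi n).
  move=> k t n; elim: t => [|t IH]; first by rewrite expr0 mul1r.
  have -> : arma_branch L (psi k) (varphi k) x (y0 k) t.+1 - ys k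
      = psi k *: (Lc *m (arma_branch L (psi k) (varphi k) x (y0 k) t - ys k)).
    rewrite /= [X in _ - X = _](hfix k) opprD addrACA subrr addr0 mulmxBr scalerBr.
    by [].
  by rewrite cinnerZ hco IH exprS; ring.
have htarget : graph_filter_target psi varphi c lam phi x = c *: x + \sum_k ys k.
  rewrite /graph_filter_target /freq_resp.
  under eq_bigr => n _ do rewrite mulrDl scalerDl.
  rewrite big_split /=; congr (_ + _).
    by rewrite [in RHS]hx scaler_sumr; apply: eq_bigr => n _; rewrite scalerA.
  rewrite /ys exchange_big; apply: eq_bigr => n _ /=.
  rewrite mulr_suml scaler_suml; apply: eq_bigr => k _.
  by [].
pose q : R := \big[Num.max/0]_(k < K) (Normc.normc (psi k) * rho).
pose A k n := cinner (y0 k - ys k) (Phi n).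
pose C : R := \sum_(j < N) \sum_(k < K) \sum_(n < N) Normc.normc (A k n) * `|phi n j 0|.
have q_ge0 : 0 <= q by exact: bigmax_ge_id.
have hdiff : forall t, arma_output L psi varphi c x y0 t
    - graph_filter_target psi varphi c lam phi x
    = \sum_k \sum_n ((psi k * (lam n)%:C%C) ^+ t * A k n) *: Phi n.
  move=> t; rewrite /arma_output htarget [c *: x + _]addrC opprD addrACA subrr addr0.
  rewrite -sumrB; apply: eq_bigr => k _.
  rewrite [LHS]hcomp; apply: eq_bigr => n _; rewrite herr //.
exists C, q; split; first exact: q_ge0.
split.
  apply: bigmax_lt; first exact: ltr01.
  move=> k _.
  have hp : 0 < Normc.normc (psi k).
    rewrite lt_def nm_ge0 andbT; apply/eqP => /Normc.eq0_normc E.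
    by move: (hpsi k); rewrite E eqxx.
  have := hpole k; rewrite /arma_pole Normc.normcV => h.
  by rewrite mulrC -ltr_pdivlMr // mul1r.
move=> t j.
have -> : arma_output L psi varphi c x y0 t j 0
    - graph_filter_target psi varphi c lam phi x j 0
    = \sum_k \sum_n ((psi k * (lam n)%:C%C) ^+ t * A k n) * (phi n j 0)%:C%C.
  transitivity ((arma_output L psi varphi c x y0 t
    - graph_filter_target psi varphi c lam phi x) j 0); first by rewrite !mxE.
  rewrite hdiff summxE; apply: eq_bigr => k _.
  rewrite summxE; apply: eq_bigr => n _; rewrite !mxE //.
rewrite -lecR -nmE.
apply: (le_trans (ler_norm_sum _ _ _)).
apply: (@le_trans _ _ (\sum_k \sum_n (q ^+ t * (Normc.normc (A k n) * `|phi n j 0|))%:C%C)).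
  apply: ler_sum => k _; apply: (le_trans (ler_norm_sum _ _ _)); apply: ler_sum => n _.
  rewrite !normrM normrX !nmE nm_real -!rmorphXn -!rmorphM lecR mulrA.
  rewrite ler_wpM2r ?normr_ge0 // ler_wpM2r ?nm_ge0 //.
  rewrite Normc.normcM nm_real; apply: lerXn2r; rewrite ?nnegrE ?mulr_ge0 ?nm_ge0 ?normr_ge0 //.
  apply: (le_trans (ler_wpM2l (@nm_ge0 _ (psi k)) (hnorm n))).
  exact: (le_bigmax _ (fun k => Normc.normc (psi k) * rho)).
under eq_bigr => k _ do rewrite -rmorph_sum.
rewrite -rmorph_sum lecR.
under eq_bigr => k _ do rewrite -mulr_sumr.
rewrite -mulr_sumr mulrC ler_wpM2r ?exprn_ge0 //.
rewrite /C (bigD1 j) //= lerDl sumr_ge0 // => j' _.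
apply: sumr_ge0 => k _; apply: sumr_ge0 => n _.
by rewrite mulr_ge0 ?nm_ge0 ?normr_ge0.
Qed.
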